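(* For $d\ge 9$, the VC-dimension of the range space whose ground set is the set of hyperplanes in $\mathbb{R}^d$ is at least $d(d+1)$ and at most $5d^2\log_2 d$. Here each $d$-simplex $\sigma$ defines the range consisting of the hyperplanes meeting the interior of $\sigma$.
   Context: A finite set $H$ of hyperplanes is shattered by simplices if every subset $S\subseteq H$ equals $\{h\in H: h\cap \mathrm{int}(\sigma)\ne\emptyset\}$ for some $d$-simplex $\sigma$. The VC-dimension is the largest size of a shattered set. *)

(* Defs.v *)
From Stdlib Require Import Reals List.
Open Scope R_scope.

(* A point of R^d is a function nat -> R, of which only coordinates 0..d-1 matter. *)
Definition pt := nat -> R.

Fixpoint sumR (n : nat) (f : nat -> R) : R :=
  match n with O => 0 | S m => sumR m f + f m end.

Definition dot (d : nat) (a x : pt) : R := sumR d (fun i => a i * x i).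

Definition is_hyperplane (d : nat) (h : pt -> Prop) : Prop :=
  exists (a : pt) (b : R),
    (exists i, (i < d)%nat /\ a i <> 0) /\ forall x, h x <-> dot d a x = b.

(* A d-simplex is given by d+1 vertices v 0, ..., v d that are affinely independent. *)
Definition affinely_independent (d : nat) (v : nat -> pt) : Prop :=
  forall l : nat -> R,
    sumR (S d) l = 0 ->
    (forall i, (i < d)%nat -> sumR (S d) (fun j => l j * v j i) = 0) ->
    forall j, (j <= d)%nat -> l j = 0.

Definition is_simplex (d : nat) (v : nat -> pt) : Prop := affinely_independent d v.

Definition in_interior (d : nat) (v : nat -> pt) (x : pt) : Prop :=
  exists l : nat -> R,
    (forall j, (j <= d)%nat -> 0 < l j) /\ sumR (S d) l = 1 /\
    forall i, (i < d)%nat -> x i = sumR (S d) (fun j => l j * v j i).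

Definition meets_interior (d : nat) (v : nat -> pt) (h : pt -> Prop) : Prop :=
  exists x, in_interior d v x /\ h x.

(* A finite set of hyperplanes, listed without repetition (as sets), shattered by simplices. *)
Definition shattered (d : nat) (H : list (pt -> Prop)) : Prop :=
  (forall k, (k < length H)%nat -> is_hyperplane d (nth k H (fun _ => False))) /\
  (forall k1 k2, (k1 < length H)%nat -> (k2 < length H)%nat -> k1 <> k2 ->
     ~ (forall x, nth k1 H (fun _ => False) x <-> nth k2 H (fun _ => False) x)) /\
  (forall S : nat -> Prop,
     exists v : nat -> pt, is_simplex d v /\
       forall k, (k < length H)%nat ->
         (meets_interior d v (nth k H (fun _ => False)) <-> S k)).

Definition log2 (x : R) : R := ln x / ln 2.

(* Main.v *)
Require Import Defs.
From Stdlib Require Import Reals List Lra Lia Arith ClassicalEpsilon Classical FunctionalExtensionality.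
Import ListNotations.
Open Scope R_scope.


Lemma sumR_ext n f g : (forall i, (i < n)%nat -> f i = g i) -> sumR n f = sumR n g.
Proof. induction n; simpl; intros H; auto. rewrite IHn, H; auto. Qed.

Lemma sumR_plus n f g : sumR n (fun i => f i + g i) = sumR n f + sumR n g.
Proof. induction n; simpl; [lra|]. rewrite IHn; lra. Qed.

Lemma sumR_minus n f g : sumR n (fun i => f i - g i) = sumR n f - sumR n g.
Proof. induction n; simpl; [lra|]. rewrite IHn; lra. Qed.

Lemma sumR_scal n c f : sumR n (fun i => c * f i) = c * sumR n f.
Proof. induction n; simpl; [lra|]. rewrite IHn; lra. Qed.

Lemma sumR_const0 n : sumR n (fun _ => 0) = 0.
Proof. induction n; simpl; [lra|]. rewrite IHn; lra. Qed.

Lemma sumR_swap n m (f : nat -> nat -> R) :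
  sumR n (fun i => sumR m (fun j => f i j)) = sumR m (fun j => sumR n (fun i => f i j)).
Proof. induction n; simpl. now rewrite sumR_const0. rewrite IHn, <- sumR_plus. reflexivity. Qed.

Lemma sumR_shift n f : sumR (S n) f = f O + sumR n (fun j => f (S j)).
Proof. induction n; simpl in *; [lra|]. rewrite IHn; lra. Qed.

Lemma sumR_ind n (k : nat) (c : R) : (k < n)%nat ->
  sumR n (fun i => if Nat.eqb i k then c else 0) = c.
Proof.
  induction n; intros Hk; [lia|]. simpl.
  destruct (Nat.eqb n k) eqn:E.
  - apply Nat.eqb_eq in E; subst.
    rewrite (sumR_ext _ _ (fun _ => 0)). rewrite sumR_const0; lra.
    intros i Hi. destruct (Nat.eqb_spec i k); [lia|auto].
  - apply Nat.eqb_neq in E. rewrite IHn; [lra|lia].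
Qed.

Lemma sumR_indx n (k : nat) (c : R) (x : nat -> R) : (k < n)%nat ->
  sumR n (fun i => (if Nat.eqb i k then c else 0) * x i) = c * x k.
Proof.
  intros Hk. rewrite (sumR_ext _ _ (fun i => if Nat.eqb i k then c * x k else 0)).
  apply sumR_ind; auto.
  intros i _. destruct (Nat.eqb_spec i k); subst; lra.
Qed.

Lemma sumR_le n f g : (forall i, (i < n)%nat -> f i <= g i) -> sumR n f <= sumR n g.
Proof. induction n; simpl; intros H; [lra|].
  assert (sumR n f <= sumR n g) by (apply IHn; intros; apply H; lia).
  assert (f n <= g n) by (apply H; lia). lra. Qed.

Lemma sumR_nonneg n f : (forall i, (i < n)%nat -> 0 <= f i) -> 0 <= sumR n f.
Proof. intros H. rewrite <- (sumR_const0 n). apply sumR_le; auto. Qed.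

Lemma sumR_pos n f k : (forall i, (i < n)%nat -> 0 <= f i) -> (k < n)%nat -> 0 < f k -> 0 < sumR n f.
Proof.
  induction n; intros H Hk Hf; [lia|]. simpl.
  destruct (Nat.eq_dec k n).
  - subst. assert (0 <= sumR n f) by (apply sumR_nonneg; intros; apply H; lia). lra.
  - assert (0 < sumR n f) by (apply IHn; [intros; apply H; lia| lia | auto]).
    assert (0 <= f n) by (apply H; lia). lra.
Qed.

Lemma sumR_abs n f : Rabs (sumR n f) <= sumR n (fun i => Rabs (f i)).
Proof. induction n; simpl. rewrite Rabs_R0; lra.
  eapply Rle_trans. apply Rabs_triang. lra. Qed.

Lemma sumR_bound n f c : (forall i, (i < n)%nat -> f i <= c) -> sumR n f <= INR n * c.
Proof. induction n; simpl; intros H. lra.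
  assert (sumR n f <= INR n * c) by (apply IHn; intros; apply H; lia).
  assert (f n <= c) by (apply H; lia). destruct n; simpl in *; lra. Qed.

Lemma sumR_term n f k : (forall i, (i < n)%nat -> 0 <= f i) -> (k < n)%nat -> f k <= sumR n f.
Proof.
  induction n; intros H Hk; [lia|]. simpl.
  destruct (Nat.eq_dec k n).
  - subst. assert (0 <= sumR n f) by (apply sumR_nonneg; intros; apply H; lia). lra.
  - assert (f k <= sumR n f) by (apply IHn; [intros; apply H; lia| lia]).
    assert (0 <= f n) by (apply H; lia). lra.
Qed.

Lemma dot_comb d a (l : nat -> R) (v : nat -> pt) :
  dot d a (fun i => sumR (S d) (fun j => l j * v j i)) = sumR (S d) (fun j => l j * dot d a (v j)).
Proof.
  unfold dot. rewrite (sumR_ext d _ (fun i => sumR (S d) (fun j => a i * (l j * v j i)))).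
  rewrite sumR_swap. apply sumR_ext. intros j _. rewrite <- sumR_scal. apply sumR_ext; intros; lra.
  intros i _. rewrite <- sumR_scal. reflexivity.
Qed.

Definition hypf d (a : pt) (b : R) : pt -> Prop := fun x => dot d a x = b.

Lemma meets_iff d (v : nat -> pt) (a : pt) (b : R) (h : pt -> Prop) :
  (forall x, h x <-> dot d a x = b) ->
  (meets_interior d v h <->
   (((exists j, (j <= d)%nat /\ dot d a (v j) - b > 0) /\
     (exists j, (j <= d)%nat /\ dot d a (v j) - b < 0)) \/
    (forall j, (j <= d)%nat -> dot d a (v j) - b = 0))).
Proof.
  intros Hh. unfold meets_interior, in_interior. split.
  - intros [x [[l [Hl [Hs Hx]]] Hhx]]. apply Hh in Hhx.
    assert (Hdx : dot d a x = dot d a (fun i => sumR (S d) (fun j => l j * v j i))).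
    { unfold dot. apply sumR_ext. intros i Hi. rewrite Hx; auto. }
    rewrite dot_comb in Hdx.
    assert (Hz : sumR (S d) (fun j => l j * (dot d a (v j) - b)) = 0).
    { rewrite (sumR_ext _ _ (fun j => l j * dot d a (v j) - b * l j)) by (intros; ring).
      rewrite sumR_minus, sumR_scal. rewrite Hs. lra. }
    destruct (classic (exists j, (j <= d)%nat /\ dot d a (v j) - b > 0)) as [Hp|Hp];
    destruct (classic (exists j, (j <= d)%nat /\ dot d a (v j) - b < 0)) as [Hn|Hn].
    + left; auto.
    + exfalso. destruct Hp as [j [Hj Hj']].
      assert (0 < sumR (S d) (fun j => l j * (dot d a (v j) - b))); [|lra].
      apply sumR_pos with j; [|lia|]. intros i Hi.
      assert (0 < l i) by (apply Hl; lia).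
      assert (~ dot d a (v i) - b < 0) by (intro; apply Hn; exists i; split; [lia|auto]).
      nra. assert (0 < l j) by (apply Hl; lia). nra.
    + exfalso. destruct Hn as [j [Hj Hj']].
      assert (0 < sumR (S d) (fun j => - (l j * (dot d a (v j) - b)))); [|
        rewrite (sumR_ext _ _ (fun j => (-1) * (l j * (dot d a (v j) - b)))) in H by (intros; ring);
        rewrite sumR_scal in H; lra].
      apply sumR_pos with j; [|lia|]. intros i Hi.
      assert (0 < l i) by (apply Hl; lia).
      assert (~ dot d a (v i) - b > 0) by (intro; apply Hp; exists i; split; [lia|auto]).
      nra. assert (0 < l j) by (apply Hl; lia). nra.
    + right. intros j Hj.
      assert (~ dot d a (v j) - b > 0) by (intro; apply Hp; exists j; split; [lia|auto]).
      assert (~ dot d a (v j) - b < 0) by (intro; apply Hn; exists j; split; [lia|auto]).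
      lra.
  - intros HH.
    set (g := fun j => dot d a (v j) - b).
    assert (Hcomb : forall w : nat -> R,
      (forall j, (j <= d)%nat -> 0 < w j) ->
      sumR (S d) (fun j => w j * g j) = 0 -> meets_interior d v h).
    { intros w Hw Hwz. set (W := sumR (S d) w).
      assert (HW : 0 < W) by (apply sumR_pos with O; [intros; apply Rlt_le, Hw; lia|lia|apply Hw; lia]).
      exists (fun i => sumR (S d) (fun j => (w j / W) * v j i)). split.
      - exists (fun j => w j / W). split; [|split].
        + intros j Hj. apply Rdiv_lt_0_compat; auto.
        + unfold Rdiv. rewrite (sumR_ext _ _ (fun j => / W * w j)) by (intros; ring).
          rewrite sumR_scal. fold W. field. lra.
        + auto.
      - apply Hh. rewrite dot_comb.
        assert (sumR (S d) (fun j => w j / W * g j) = 0).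
        { unfold Rdiv. rewrite (sumR_ext _ _ (fun j => / W * (w j * g j))) by (intros; ring).
          rewrite sumR_scal, Hwz. ring. }
        unfold g in H.
        rewrite (sumR_ext _ _ (fun j => w j / W * dot d a (v j) - b * (w j / W))) in H by (intros; ring).
        rewrite sumR_minus, sumR_scal in H.
        unfold Rdiv in H. rewrite (sumR_ext _ (fun j => w j * / W) (fun j => / W * w j)) in H by (intros; ring).
        rewrite sumR_scal in H. fold W in H.
        replace (/ W * W) with 1 in H by (field; lra). lra. }
    destruct HH as [[[jp [Hjp Hp]] [jn [Hjn Hn]]] | H0].
    + (* weights 1 except jp, jn *)
      assert (Hne : jp <> jn) by (intro; subst; lra).
      set (R0 := sumR (S d) (fun j => (if Nat.eqb j jp then 0 else if Nat.eqb j jn then 0 else 1) * g j)).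
      destruct (Rle_lt_dec R0 0) as [HR|HR].
      * apply (Hcomb (fun j => if Nat.eqb j jp then (-R0 - g jn)/ g jp else if Nat.eqb j jn then 1 else 1)).
        -- intros j Hj. destruct (Nat.eqb j jp); [|destruct (Nat.eqb j jn); lra].
           apply Rdiv_lt_0_compat; fold g in Hp, Hn; unfold g; lra.
        -- rewrite (sumR_ext _ _ (fun j => (if Nat.eqb j jp then (-R0 - g jn) else 0)
                 + (if Nat.eqb j jn then g jn else 0) +
                 (if Nat.eqb j jp then 0 else if Nat.eqb j jn then 0 else 1) * g j)).
           rewrite !sumR_plus, !sumR_ind by lia. fold R0. ring.
           intros j Hj. destruct (Nat.eqb_spec j jp); destruct (Nat.eqb_spec j jn); subst; try lia.
           field. unfold g; lra. ring. ring.
      * apply (Hcomb (fun j => if Nat.eqb j jp then 1 else if Nat.eqb j jn then (-R0 - g jp)/ g jn else 1)).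
        -- intros j Hj. destruct (Nat.eqb j jp); [lra|destruct (Nat.eqb j jn); [|lra]].
           unfold Rdiv. apply Rmult_lt_reg_r with (- g jn). unfold g; lra.
           replace ((- R0 - g jp) * / g jn * - g jn) with (R0 + g jp) by (field; unfold g; lra).
           unfold g in *; lra.
        -- rewrite (sumR_ext _ _ (fun j => (if Nat.eqb j jn then (-R0 - g jp) else 0)
                 + (if Nat.eqb j jp then g jp else 0) +
                 (if Nat.eqb j jp then 0 else if Nat.eqb j jn then 0 else 1) * g j)).
           rewrite !sumR_plus, !sumR_ind by lia. fold R0. ring.
           intros j Hj. destruct (Nat.eqb_spec j jp); destruct (Nat.eqb_spec j jn); subst; try lia.
           ring. field. unfold g; lra. ring.
    + apply (Hcomb (fun _ => 1)). intros; lra.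
      rewrite (sumR_ext _ _ (fun _ => 0)). apply sumR_const0.
      intros j Hj. unfold g. rewrite H0; [ring|lia].
Qed.


Definition sumL (I : list nat) (g : nat -> R) : R := fold_right (fun i acc => g i + acc) 0 I.

Lemma sumL_app I1 I2 g : sumL (I1 ++ I2) g = sumL I1 g + sumL I2 g.
Proof. induction I1; simpl; [lra|]. rewrite IHI1; lra. Qed.

Lemma sumL_plus I f g : sumL I (fun i => f i + g i) = sumL I f + sumL I g.
Proof. induction I; simpl; [lra|]. rewrite IHI; lra. Qed.

Lemma sumL_scal I c f : sumL I (fun i => c * f i) = c * sumL I f.
Proof. induction I; simpl; [lra|]. rewrite IHI; lra. Qed.

Lemma sumL_ext I f g : (forall i, In i I -> f i = g i) -> sumL I f = sumL I g.
Proof. induction I; simpl; intros H; auto. rewrite H, IHI; auto. Qed.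

Lemma sumL_0 I : sumL I (fun _ => 0) = 0.
Proof. induction I; simpl; [lra|]. rewrite IHI; lra. Qed.

Lemma sumL_ind I k (x : pt) : NoDup I -> In k I ->
  sumL I (fun i => (if Nat.eqb i k then 1 else 0) * x i) = x k.
Proof.
  induction I; simpl; intros Hn Hk; [tauto|]. inversion Hn; subst.
  destruct Hk as [<-|Hk].
  - rewrite Nat.eqb_refl. rewrite (sumL_ext _ _ (fun _ => 0)). rewrite sumL_0; lra.
    intros i Hi. destruct (Nat.eqb_spec i a); subst; [tauto|lra].
  - rewrite IHI; auto. destruct (Nat.eqb_spec a k); subst; [tauto|lra].
Qed.

Definition aff (I : list nat) (f : pt -> R) : Prop :=
  exists (c : R) (a : pt), forall y, f y = c + sumL I (fun i => a i * y i).

Lemma aff_const I c : aff I (fun _ => c).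
Proof. exists c, (fun _ => 0). intros y. rewrite (sumL_ext _ _ (fun _ => 0)), sumL_0 by (intros; ring). ring. Qed.

Lemma aff_proj I k : NoDup I -> In k I -> aff I (fun y => y k).
Proof. intros. exists 0, (fun i => if Nat.eqb i k then 1 else 0). intros y. rewrite sumL_ind; auto; ring. Qed.

Lemma aff_plus I f g : aff I f -> aff I g -> aff I (fun y => f y + g y).
Proof. intros [c1 [a1 H1]] [c2 [a2 H2]]. exists (c1 + c2), (fun i => a1 i + a2 i).
  intros y. rewrite H1, H2. rewrite (sumL_ext _ (fun i => (a1 i + a2 i) * y i) (fun i => a1 i * y i + a2 i * y i)) by (intros; ring).
  rewrite sumL_plus; ring. Qed.

Lemma aff_scal I c f : aff I f -> aff I (fun y => c * f y).
Proof. intros [c1 [a1 H1]]. exists (c * c1), (fun i => c * a1 i).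
  intros y. rewrite H1. rewrite (sumL_ext _ (fun i => (c * a1 i) * y i) (fun i => c * (a1 i * y i))) by (intros; ring).
  rewrite sumL_scal; ring. Qed.

Lemma aff_sumR I n (F : nat -> pt -> R) : (forall i, (i < n)%nat -> aff I (F i)) ->
  aff I (fun y => sumR n (fun i => F i y)).
Proof. induction n; simpl; intros H. apply aff_const.
  apply aff_plus. apply IHn; intros; apply H; lia. apply H; lia. Qed.

Lemma aff_comb I f y1 y2 t : aff I f ->
  f (fun i => (1 - t) * y1 i + t * y2 i) = (1 - t) * f y1 + t * f y2.
Proof. intros [c [a H]]. rewrite !H.
  rewrite (sumL_ext _ _ (fun i => (1 - t) * (a i * y1 i) + t * (a i * y2 i))) by (intros; ring).
  rewrite sumL_plus, !sumL_scal. ring. Qed.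

Inductive sg3 := Neg | Zer | Pos.
Definition sg3_eq_dec (x y : sg3) : {x = y} + {x <> y}.
Proof. decide equality. Defined.
Definition sgn (r : R) : sg3 :=
  match Rlt_dec r 0 with left _ => Neg | right _ => match Rlt_dec 0 r with left _ => Pos | right _ => Zer end end.

Lemma sgn_Zer r : sgn r = Zer -> r = 0.
Proof. unfold sgn. destruct (Rlt_dec r 0); [discriminate|]. destruct (Rlt_dec 0 r); [discriminate|]. lra. Qed.
Lemma sgn_Pos r : sgn r = Pos -> 0 < r.
Proof. unfold sgn. destruct (Rlt_dec r 0); [discriminate|]. destruct (Rlt_dec 0 r); [auto|discriminate]. Qed.
Lemma sgn_Neg r : sgn r = Neg -> r < 0.
Proof. unfold sgn. destruct (Rlt_dec r 0); [auto|]. destruct (Rlt_dec 0 r); discriminate. Qed.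
Lemma sgn_pos r : 0 < r -> sgn r = Pos.
Proof. unfold sgn. destruct (Rlt_dec r 0); [lra|]. destruct (Rlt_dec 0 r); [auto|lra]. Qed.
Lemma sgn_neg r : r < 0 -> sgn r = Neg.
Proof. unfold sgn. destruct (Rlt_dec r 0); [auto|lra]. Qed.
Lemma sgn_zero r : r = 0 -> sgn r = Zer.
Proof. unfold sgn. destruct (Rlt_dec r 0); [lra|]. destruct (Rlt_dec 0 r); [lra|auto]. Qed.

Lemma sgn_comb a b t : 0 < t < 1 -> sgn a = sgn b -> sgn ((1 - t) * a + t * b) = sgn a.
Proof. intros Ht E. destruct (sgn a) eqn:Ea.
  - apply sgn_Neg in Ea. symmetry in E. apply sgn_Neg in E. apply sgn_neg. nra.
  - apply sgn_Zer in Ea. symmetry in E. apply sgn_Zer in E. apply sgn_zero. subst; ring.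
  - apply sgn_Pos in Ea. symmetry in E. apply sgn_Pos in E. apply sgn_pos. nra.
Qed.

Definition pat (fs : list (pt -> R)) (y : pt) : list sg3 := map (fun f => sgn (f y)) fs.
Definition realized fs p := exists y, pat fs y = p.

Fixpoint F (N m : nat) : R :=
  match N with O => 1 | S N' => match m with O => F N' O | S m' => F N' (S m') + 2 * F N' m' end end.

Lemma F_nonneg N m : 0 <= F N m.
Proof. revert m; induction N; intros m; simpl. lra. destruct m. auto. pose proof (IHN (S m)); pose proof (IHN m). lra. Qed.

Lemma F_mono N m : F N m <= F (S N) m.
Proof. destruct m; simpl. lra. pose proof (F_nonneg N m). lra. Qed.

Lemma nodup_all_eq {A} (L : list A) : NoDup L -> (forall x y, In x L -> In y L -> x = y) -> (length L <= 1)%nat.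
Proof. intros Hn H. destruct L as [|a [|b L]]; simpl; try lia.
  inversion Hn; subst. exfalso. apply H2. left. apply H; simpl; auto. Qed.

Lemma nodup_map_inj {A B} (f : A -> B) (L : list A) : NoDup L ->
  (forall x y, In x L -> In y L -> f x = f y -> x = y) -> NoDup (map f L).
Proof. induction L; simpl; intros Hn H; constructor; inversion Hn; subst.
  - intros Hin. apply in_map_iff in Hin. destruct Hin as [x [Hx Hx']].
    assert (x = a) by (apply H; auto). subst; auto.
  - apply IHL; auto.
Qed.

Lemma filter_filter' {A} (f g : A -> bool) l : filter f (filter g l) = filter (fun x => andb (g x) (f x)) l.
Proof. induction l; simpl; auto. destruct (g a); simpl; [destruct (f a); simpl; [f_equal|]|]; auto. Qed.

Definition hd_is (s : sg3) (p : list sg3) : bool :=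
  match p with s' :: _ => if sg3_eq_dec s' s then true else false | [] => false end.

Section Elim.
Variables (l1 l2 : list nat) (k : nat) (cg : R) (ag : pt).
Let I := l1 ++ k :: l2.
Let I' := l1 ++ l2.
Definition Emap (y : pt) : pt := fun j => if Nat.eqb j k then - (cg + sumL I' (fun i => ag i * y i)) / ag k else y j.

Hypothesis HnI : NoDup I.
Hypothesis Hak : ag k <> 0.

Lemma sumL_I g : sumL I g = g k + sumL I' g.
Proof. unfold I, I'. rewrite !sumL_app. simpl. ring. Qed.

Lemma notk i : In i I' -> Nat.eqb i k = false.
Proof. intros Hi. apply Nat.eqb_neq. intros ->. apply (NoDup_remove_2 _ _ _ HnI). auto. Qed.

Lemma Emap_I' y g : sumL I' (fun i => g i * Emap y i) = sumL I' (fun i => g i * y i).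
Proof. apply sumL_ext. intros i Hi. unfold Emap. rewrite notk; auto. Qed.

Lemma E_aff f : aff I f -> aff I' (fun y => f (Emap y)).
Proof. intros [c [b H]]. exists (c - b k * cg / ag k), (fun i => b i - b k * ag i / ag k).
  intros y. rewrite H, sumL_I, Emap_I'. unfold Emap at 1. rewrite Nat.eqb_refl.
  rewrite (sumL_ext I' (fun i => (b i - b k * ag i / ag k) * y i) (fun i => b i * y i + (- (b k / ag k)) * (ag i * y i))) by (intros; field; auto).
  rewrite sumL_plus, sumL_scal. field. auto. Qed.

Lemma E_zero y : cg + sumL I (fun i => ag i * Emap y i) = 0.
Proof. rewrite sumL_I, Emap_I'. unfold Emap. rewrite Nat.eqb_refl. field. auto. Qed.

Lemma E_fix y f : cg + sumL I (fun i => ag i * y i) = 0 -> aff I f -> f (Emap y) = f y.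
Proof. intros Hz [c [b H]]. rewrite !H. f_equal. apply sumL_ext. intros i _.
  unfold Emap. destruct (Nat.eqb_spec i k); [|auto]. subst. f_equal.
  rewrite sumL_I in Hz. field_simplify_eq; auto. lra. Qed.
End Elim.

Lemma pat_eq fs y z : Forall (fun f => f z = f y) fs -> pat fs z = pat fs y.
Proof. induction 1; simpl; auto. rewrite H, IHForall. auto. Qed.

Lemma In_pat_cons fs g p L : (forall p, In p L -> realized (g :: fs) p) -> In p L ->
  exists y, p = sgn (g y) :: pat fs y.
Proof. intros H Hp. destruct (H p Hp) as [y Hy]. exists y. rewrite <- Hy. reflexivity. Qed.

Theorem count_N : forall N fs I L, length fs = N -> NoDup I -> Forall (aff I) fs -> NoDup L ->
  (forall p, In p L -> realized fs p) -> INR (length L) <= F (length fs) (length I).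
Proof.
  induction N as [|N IHN]; intros fs0 I L Hlen0 HI Hf HL HR;
   (destruct fs0 as [|g fs]; [|simpl in Hlen0; try discriminate]).
  - simpl. assert (length L <= 1)%nat.
    { apply nodup_all_eq; auto. intros x y Hx Hy. destruct (HR x Hx) as [? <-]. destruct (HR y Hy) as [? <-]. reflexivity. }
    apply le_INR in H. simpl in H. lra.
  - discriminate.
  - injection Hlen0 as Hlen0.
    assert (IH : forall fs1 I L, length fs1 = length fs -> NoDup I -> Forall (aff I) fs1 -> NoDup L ->
      (forall p, In p L -> realized fs1 p) -> INR (length L) <= F (length fs) (length I)).
    { intros fs1 I1 L1 E. rewrite <- E. apply IHN. lia. }
    inversion Hf as [|? ? Hg Hfs]; subst. destruct Hg as [cg [ag Hg]].
    assert (Htl : forall s, NoDup (map (@tl _) (filter (hd_is s) L))).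
    { intros s. apply nodup_map_inj. apply NoDup_filter; auto.
      intros x y Hx Hy E. apply filter_In in Hx, Hy. destruct Hx as [Hx Hx'], Hy as [Hy Hy'].
      destruct x as [|a x]; [discriminate|]. destruct y as [|b y]; [discriminate|].
      simpl in *. destruct (sg3_eq_dec a s), (sg3_eq_dec b s); try discriminate. subst; auto. }
    assert (Hrl : forall s t, In t (map (@tl _) (filter (hd_is s) L)) -> exists y, sgn (g y) = s /\ pat fs y = t).
    { intros s t Ht. apply in_map_iff in Ht. destruct Ht as [p [<- Hp]]. apply filter_In in Hp. destruct Hp as [Hp Hs].
      destruct (In_pat_cons fs g p L HR Hp) as [y ->]. exists y. simpl in Hs. destruct (sg3_eq_dec (sgn (g y)) s); [auto|discriminate]. }
    destruct (classic (exists k, In k I /\ ag k <> 0)) as [[k [Hk Hak]] | Hno].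
    + destruct (in_split _ _ Hk) as [l1 [l2 EI]]. subst I.
      set (I' := l1 ++ l2).
      assert (HlI : length (l1 ++ k :: l2) = S (length I')) by (unfold I'; rewrite !length_app; simpl; lia).
      rewrite HlI. simpl length. simpl F.
      assert (HI' : NoDup I') by (apply (NoDup_remove_1 _ _ _ HI)).
      set (fs' := map (fun f => fun y => f (Emap l1 l2 k cg ag y)) fs).
      assert (Hfs' : Forall (aff I') fs').
      { unfold fs'. apply Forall_map. eapply Forall_impl; [|exact Hfs]. intros f Hf'. apply E_aff; auto. }
      assert (Hlen : length fs' = length fs) by (unfold fs'; apply length_map).
      assert (Hzero : forall t y, g y = 0 -> pat fs y = t -> realized fs' t).
      { intros t y Hy Ht. exists y. rewrite <- Ht. unfold fs', pat. rewrite map_map.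
        apply map_ext_in. intros f Hf'. rewrite E_fix; auto.
        rewrite <- Hg; auto. rewrite Forall_forall in Hfs; auto. }
      set (LZ := filter (hd_is Zer) L). set (LP := filter (hd_is Pos) L). set (LN := filter (hd_is Neg) L).
      assert (HlenL : length L = (length LZ + length LP + length LN)%nat).
      { assert (forall p, In p L -> (hd_is Zer p || hd_is Pos p || hd_is Neg p)%bool = true).
        { intros p Hp. destruct (In_pat_cons fs g p L HR Hp) as [y ->]. simpl.
          destruct (sgn (g y)); simpl; auto. }
        unfold LZ, LP, LN. rewrite <- (filter_length (hd_is Zer) L).
        rewrite <- (filter_length (hd_is Pos) (filter (fun x => negb (hd_is Zer x)) L)).
        rewrite !filter_filter'.
        assert (E1 : filter (fun x => andb (negb (hd_is Zer x)) (hd_is Pos x)) L = filter (hd_is Pos) L).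
        { apply filter_ext. intros [|a p]; simpl; auto. destruct (sg3_eq_dec a Zer), (sg3_eq_dec a Pos); subst; auto; discriminate. }
        assert (E2 : filter (fun x => andb (negb (hd_is Zer x)) (negb (hd_is Pos x))) L = filter (hd_is Neg) L).
        { apply filter_ext_in. intros p Hp. specialize (H p Hp). destruct p as [|a p]; simpl in *; auto.
          destruct (sg3_eq_dec a Zer), (sg3_eq_dec a Pos), (sg3_eq_dec a Neg); subst; simpl in *; auto; try discriminate.
          }
        rewrite E1, E2. lia. }
      set (TZ := map (@tl _) LZ). set (TP := map (@tl _) LP). set (TN := map (@tl _) LN).
      assert (B1 : INR (length TZ) <= F (length fs) (length I')).
      { apply IH with fs'; auto. apply Htl. intros t Ht. destruct (Hrl _ _ Ht) as [y [Hy Ht']].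
        apply (Hzero t y); auto. apply sgn_Zer; auto. }
      set (TNo := filter (fun t => if in_dec (list_eq_dec sg3_eq_dec) t TP then false else true) TN).
      set (TNi := filter (fun t => if in_dec (list_eq_dec sg3_eq_dec) t TP then true else false) TN).
      assert (B2 : INR (length (TP ++ TNo)) <= F (length fs) (S (length I'))).
      { rewrite <- HlI. apply IH with fs; auto.
        - apply NoDup_app. apply Htl. apply NoDup_filter, Htl.
          intros t H1 H2. unfold TNo in H2. apply filter_In in H2. destruct H2 as [_ H2].
          destruct (in_dec (list_eq_dec sg3_eq_dec) t TP); [discriminate|tauto].
        - intros t Ht. apply in_app_or in Ht. destruct Ht as [Ht|Ht].
          + destruct (Hrl _ _ Ht) as [y [_ Hy]]. exists y; auto.
          + unfold TNo in Ht. apply filter_In in Ht. destruct (Hrl _ _ (proj1 Ht)) as [y [_ Hy]]. exists y; auto. }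
      assert (B3 : INR (length TNi) <= F (length fs) (length I')).
      { apply IH with fs'; auto. apply NoDup_filter, Htl.
        intros t Ht. unfold TNi in Ht. apply filter_In in Ht. destruct Ht as [Ht Hin].
        destruct (in_dec (list_eq_dec sg3_eq_dec) t TP) as [HtP|]; [|discriminate].
        destruct (Hrl _ _ Ht) as [y2 [Hy2 Ht2]]. destruct (Hrl _ _ HtP) as [y1 [Hy1 Ht1]].
        apply sgn_Neg in Hy2. apply sgn_Pos in Hy1.
        set (th := g y1 / (g y1 - g y2)).
        assert (Hth : 0 < th < 1).
        { unfold th. split. apply Rdiv_lt_0_compat; lra.
          apply Rmult_lt_reg_r with (g y1 - g y2). lra. unfold Rdiv. rewrite Rmult_assoc, Rinv_l; lra. }
        set (z := fun i => (1 - th) * y1 i + th * y2 i).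
        assert (Hgaff : aff (l1 ++ k :: l2) g) by (exists cg, ag; auto).
        apply (Hzero t z).
        - unfold z. rewrite (aff_comb (l1 ++ k :: l2)); auto. unfold th. field. lra.
        - rewrite <- Ht1. assert (Ht3 : pat fs y2 = pat fs y1) by congruence.
          clear -Hfs Ht3 Hth. unfold z. revert Ht3.
          induction Hfs; simpl; auto. intros E. injection E as E1 E2.
          rewrite (aff_comb (l1 ++ k :: l2)); auto. rewrite sgn_comb; auto. f_equal; auto. }
      assert (HTN : length TN = (length TNi + length TNo)%nat).
      { unfold TNi, TNo. rewrite <- (filter_length (fun t => if in_dec (list_eq_dec sg3_eq_dec) t TP then true else false) TN).
        f_equal. f_equal. apply filter_ext. intros t. destruct (in_dec (list_eq_dec sg3_eq_dec) t TP); auto. }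
      rewrite length_app in B2.
      assert (length LZ = length TZ) by (unfold TZ; rewrite length_map; auto).
      assert (length LP = length TP) by (unfold TP; rewrite length_map; auto).
      assert (length LN = length TN) by (unfold TN; rewrite length_map; auto).
      rewrite HlenL. rewrite !plus_INR. rewrite H, H0, H1, HTN, plus_INR.
      rewrite plus_INR in B2. lra.
    +
      assert (Hc : forall y, g y = cg).
      { intros y. rewrite Hg. rewrite (sumL_ext _ _ (fun _ => 0)). rewrite sumL_0; ring.
        intros i Hi. destruct (Req_dec (ag i) 0) as [->|Hne]; [ring|]. exfalso; apply Hno; eauto. }
      assert (HN : NoDup (map (@tl _) L)).
      { apply nodup_map_inj; auto. intros x y Hx Hy E.
        destruct (In_pat_cons fs g x L HR Hx) as [y1 ->]. destruct (In_pat_cons fs g y L HR Hy) as [y2 ->].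
        simpl in E. rewrite !Hc, E. reflexivity. }
      assert (INR (length (map (@tl _) L)) <= F (length fs) (length I)).
      { apply IH with fs; auto. intros t Ht. apply in_map_iff in Ht. destruct Ht as [p [<- Hp]].
        destruct (In_pat_cons fs g p L HR Hp) as [y ->]. exists y; auto. }
      rewrite length_map in H. simpl length. pose proof (F_mono (length fs) (length I)). lra.
Qed.



Lemma pow_le1 x m : 0 <= x <= 1 -> x ^ m <= 1.
Proof. intros H. induction m; simpl. lra. assert (0 <= x ^ m) by (apply pow_le; lra). nra. Qed.

Lemma pow_ge1 x m : 1 <= x -> 1 <= x ^ m.
Proof. intros H. induction m; simpl. lra. nra. Qed.

Lemma F_bound N m x : 0 < x <= 1 -> F N m * x ^ m <= (1 + 2 * x) ^ N.
Proof.
  intros Hx. revert m; induction N; intros m; simpl.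
  - pose proof (pow_le1 x m). lra.
  - destruct m.
    + simpl. specialize (IHN O). simpl in IHN. assert (1 <= (1 + 2*x)^N) by (apply pow_ge1; lra). nra.
    + pose proof (IHN (S m)). pose proof (IHN m). simpl in *.
      assert (0 < x ^ m) by (apply pow_lt; lra). nra.
Qed.

Lemma lnle x y : 0 < x -> x <= y -> ln x <= ln y.
Proof. intros Hx [H|H]. apply Rlt_le, ln_increasing; auto. subst; lra. Qed.

Lemma ln_1p y : 0 < y -> ln (1 + y) <= y.
Proof. intros Hy. rewrite <- (ln_exp y) at 2. apply lnle. lra. apply exp_ineq1_le. Qed.

Lemma final_ineq (n d : nat) : (9 <= d)%nat -> 2 ^ n <= F (n * (d + 1)) (d * (d + 1)) ->
  INR n <= 5 * INR d ^ 2 * log2 (INR d).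
Proof.
  intros Hd HF.
  assert (Hd' : 9 <= INR d) by (replace 9 with (INR 9) by (simpl; lra); apply le_INR; auto).
  set (rd := INR d). fold rd in Hd'.
  set (x := / (20 * (rd + 1))).
  assert (Hx : 0 < x <= 1).
  { unfold x. split. apply Rinv_0_lt_compat; lra. rewrite <- Rinv_1. apply Rinv_le_contravar; lra. }
  pose proof (F_bound (n * (d+1)) (d * (d+1)) x Hx) as HB.
  assert (Hxp : 0 < x ^ (d * (d+1))) by (apply pow_lt; lra).
  assert (H1 : 2 ^ n * x ^ (d * (d+1)) <= (1 + 2*x) ^ (n * (d+1))).
  { eapply Rle_trans; [|exact HB]. apply Rmult_le_compat_r; lra. }
  apply lnle in H1; [| apply Rmult_lt_0_compat; auto; apply pow_lt; lra].
  rewrite ln_mult, !ln_pow in H1 by (try apply pow_lt; lra).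
  assert (Hl1 : ln (1 + 2 * x) <= 2 * x) by (apply ln_1p; lra).
  set (r := ln 2) in *. set (L := ln rd).
  assert (Hr : / 2 < r) by apply ln_lt_2.
  assert (Hlx : ln x = - ln (20 * (rd + 1))) by (unfold x; apply ln_Rinv; lra).
  assert (H64 : ln (20 * (rd + 1)) <= 6 * r + L).
  { replace (6 * r) with (INR 6 * ln 2) by (simpl; unfold r; ring).
    rewrite <- ln_pow by lra. unfold L. rewrite <- ln_mult by (simpl; lra).
    apply lnle. lra. simpl. lra. }
  assert (HL : 3 * r <= L).
  { replace (3 * r) with (INR 3 * ln 2) by (simpl; unfold r; ring).
    rewrite <- ln_pow by lra. apply lnle. simpl; lra. simpl; lra. }
  rewrite !mult_INR, !plus_INR in H1. simpl (INR 1) in H1. fold rd in H1.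
  assert (Hnn : 0 <= INR n) by apply pos_INR.
  set (rn := INR n) in *.
  assert (HA : rn * r - rd * (rd + 1) * (6 * r + L) <= rn / 10).
  { assert (rn * (rd + 1) * ln (1 + 2 * x) <= rn * (rd + 1) * (2 * x)).
    { apply Rmult_le_compat_l; [nra|auto]. }
    assert (rn * (rd + 1) * (2 * x) = rn / 10) by (unfold x; field; lra).
    assert (rd * (rd + 1) * ln (20 * (rd + 1)) <= rd * (rd + 1) * (6 * r + L)) by (apply Rmult_le_compat_l; nra).
    rewrite Hlx in H1. nra. }
  unfold log2. fold r. fold rd. fold L.
  assert (HK : (rd + 1) * (6 * r + L) * r <= 5 * rd * L * (r - / 10)).
  { assert (E1 : (10/9) * (6 * r + L) * r <= 5 * L * (r - / 10)).
    { assert (0 < 35 * r / 9 - / 2) by lra.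
      assert (L * (35 * r / 9 - / 2) >= 3 * r * (35 * r / 9 - / 2)) by nra.
      nra. }
    assert (0 <= (6 * r + L) * r) by nra.
    assert ((rd + 1) * ((6 * r + L) * r) <= (10/9 * rd) * ((6 * r + L) * r)) by (apply Rmult_le_compat_r; lra).
    nra. }
  assert (Hfin : rn * r <= 5 * rd ^ 2 * L).
  { assert (rn * (r - /10) <= rd * (rd + 1) * (6 * r + L)) by lra.
    assert (rn * (r - /10) * r <= rd * (rd + 1) * (6 * r + L) * r) by (apply Rmult_le_compat_r; lra).
    assert (rd * ((rd + 1) * (6 * r + L) * r) <= rd * (5 * rd * L * (r - / 10))) by (apply Rmult_le_compat_l; lra).
    assert (rn * r * (r - /10) <= 5 * rd ^ 2 * L * (r - /10)) by (simpl; nra).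
    apply Rmult_le_reg_r with (r - /10); lra. }
  unfold Rdiv. apply Rmult_le_reg_r with r. lra.
  replace (5 * rd ^ 2 * (L * / r) * r) with (5 * rd ^ 2 * L) by (field; lra). lra.
Qed.


Fixpoint allb (n : nat) : list (list bool) :=
  match n with O => [[]] | S n => map (cons true) (allb n) ++ map (cons false) (allb n) end.

Lemma allb_length n : length (allb n) = (2 ^ n)%nat.
Proof. induction n; simpl; auto. rewrite length_app, !length_map, IHn. lia. Qed.

Lemma allb_in n s : In s (allb n) -> length s = n.
Proof. revert s; induction n; simpl; intros s H. destruct H as [<-|[]]; auto.
  apply in_app_or in H. destruct H as [H|H]; apply in_map_iff in H; destruct H as [t [<- Ht]]; simpl; f_equal; auto. Qed.

Lemma allb_nodup n : NoDup (allb n).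
Proof. induction n; simpl. constructor; [simpl; tauto|constructor].
  apply NoDup_app. apply nodup_map_inj; auto. intros x y _ _ E; injection E; auto.
  apply nodup_map_inj; auto. intros x y _ _ E; injection E; auto.
  intros a H1 H2. apply in_map_iff in H1, H2. destruct H1 as [? [<- _]]. destruct H2 as [? [E _]]. discriminate. Qed.

Lemma aff_ext I f g : (forall y, f y = g y) -> aff I g -> aff I f.
Proof. intros E [c [a H]]. exists c, a. intros y. rewrite E; auto. Qed.

Lemma pat_app f1 f2 y : pat (f1 ++ f2) y = pat f1 y ++ pat f2 y.
Proof. unfold pat. apply map_app. Qed.

Lemma pat_flat {X} (G : X -> list (pt -> R)) l y : pat (flat_map G l) y = flat_map (fun k => pat (G k) y) l.
Proof. induction l; simpl; auto. rewrite pat_app, IHl. auto. Qed.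

Lemma flat_len {X Y} (G : X -> list Y) l c : (forall k, length (G k) = c) -> length (flat_map G l) = (length l * c)%nat.
Proof. intros H. induction l; simpl; auto. rewrite length_app, H, IHl. lia. Qed.

Lemma app_inv_len {A} (l1 l2 r1 r2 : list A) : length l1 = length l2 -> l1 ++ r1 = l2 ++ r2 -> l1 = l2 /\ r1 = r2.
Proof. revert l2; induction l1; intros [|b l2] Hl E; simpl in *; try discriminate; auto.
  injection E as E1 E2. injection Hl as Hl. destruct (IHl1 l2 Hl E2). subst; auto. Qed.

Lemma map_seq_eq {A} (P Q : nat -> A) a m : map P (seq a m) = map Q (seq a m) -> forall j, (a <= j < a + m)%nat -> P j = Q j.
Proof. revert a; induction m; intros a E j Hj; [lia|]. simpl in E. injection E as E1 E2.
  destruct (Nat.eq_dec j a). subst; auto. apply (IHm (S a)); auto; lia. Qed.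

Lemma flat_seq_eq {A} (P Q : nat -> nat -> A) a n m :
  flat_map (fun k => map (P k) (seq 0 m)) (seq a n) = flat_map (fun k => map (Q k) (seq 0 m)) (seq a n) ->
  forall k j, (a <= k < a + n)%nat -> (j < m)%nat -> P k j = Q k j.
Proof. revert a; induction n; intros a E k j Hk Hj; [lia|]. simpl in E.
  apply app_inv_len in E; [|rewrite !length_map; auto]. destruct E as [E1 E2].
  destruct (Nat.eq_dec k a). subst. apply (map_seq_eq _ _ 0 m E1); lia.
  apply (IHn (S a)); auto; lia. Qed.

Definition RHS d (u : nat -> R) : Prop :=
  ((exists j, (j <= d)%nat /\ u j > 0) /\ (exists j, (j <= d)%nat /\ u j < 0)) \/ (forall j, (j <= d)%nat -> u j = 0).

Lemma RHS_sgn d u w : (forall j, (j <= d)%nat -> sgn (u j) = sgn (w j)) -> RHS d u -> RHS d w.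
Proof. intros E [[[j1 [H1 H1']] [j2 [H2 H2']]]|H].
  - left. split; [exists j1|exists j2]; split; auto.
    apply sgn_Pos. rewrite <- E; auto. apply sgn_pos; lra.
    apply sgn_Neg. rewrite <- E; auto. apply sgn_neg; lra.
  - right. intros j Hj. apply sgn_Zer. rewrite <- E; auto. apply sgn_zero; auto.
Qed.

Lemma upper d (hd : (9 <= d)%nat) (H : list (pt -> Prop)) : shattered d H ->
  INR (length H) <= 5 * INR d ^ 2 * log2 (INR d).
Proof.
  intros [Hhyp [_ Hsh]]. set (n := length H). set (hk := fun k => nth k H (fun _ => False)).
  assert (HAB : forall k, {ab : pt * R | (k < n)%nat -> forall x, hk k x <-> dot d (fst ab) x = snd ab}).
  { intros k. apply constructive_indefinite_description.
    destruct (lt_dec k n) as [Hk|Hk].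
    - destruct (Hhyp k Hk) as [a [b [_ Hab]]]. exists (a, b). intros _; apply Hab.
    - exists ((fun _ => 0), 0). intros; lia. }
  set (A := fun k => fst (proj1_sig (HAB k))). set (B := fun k => snd (proj1_sig (HAB k))).
  assert (HABk : forall k, (k < n)%nat -> forall x, hk k x <-> dot d (A k) x = B k).
  { intros k Hk. exact (proj2_sig (HAB k) Hk). }
  assert (HV : forall s : list bool, {v : nat -> pt | forall k, (k < n)%nat -> (meets_interior d v (hk k) <-> nth k s false = true)}).
  { intros s. apply constructive_indefinite_description. destruct (Hsh (fun k => nth k s false = true)) as [v [_ Hv]].
    exists v. unfold hk. apply Hv. }
  set (V := fun s => proj1_sig (HV s)).
  assert (HVs : forall s k, (k < n)%nat -> (meets_interior d (V s) (hk k) <-> nth k s false = true)).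
  { intros s. exact (proj2_sig (HV s)). }
  set (ys := fun s : list bool => fun idx : nat => V s (idx / d)%nat (idx mod d)%nat).
  set (fk := fun k j => fun y : pt => dot d (A k) (fun i => y (j * d + i)%nat) - B k).
  set (fs := flat_map (fun k => map (fk k) (seq 0 (S d))) (seq 0 n)).
  set (I := seq 0 (S d * d)).
  assert (Hdpos : (d <> 0)%nat) by lia.
  assert (Hval : forall s k j, (j <= d)%nat -> fk k j (ys s) = dot d (A k) (V s j) - B k).
  { intros s k j Hj. unfold fk, ys. f_equal. unfold dot. apply sumR_ext. intros i Hi. f_equal.
    rewrite (Nat.add_comm (j * d)).
    assert (E1 : ((i + j * d) / d = j)%nat) by (rewrite Nat.div_add by lia; rewrite Nat.div_small by lia; lia).
    assert (E2 : ((i + j * d) mod d = i)%nat) by (rewrite Nat.Div0.mod_add; apply Nat.mod_small; lia).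
    rewrite E1, E2. reflexivity. }
  assert (Hpat : forall s, pat fs (ys s) = flat_map (fun k => map (fun j => sgn (dot d (A k) (V s j) - B k)) (seq 0 (S d))) (seq 0 n)).
  { intros s. unfold fs. rewrite pat_flat. apply flat_map_ext. intros k.
    unfold pat. rewrite map_map. apply map_ext_in.
    intros j Hj. apply in_seq in Hj. rewrite Hval; auto. lia. }
  set (Lp := map (fun s => pat fs (ys s)) (allb n)).
  assert (HLp : INR (length Lp) <= F (length fs) (length I)).
  { apply count_N with (length fs); auto.
    - apply seq_NoDup.
    - unfold fs. apply Forall_forall. intros f Hf. apply in_flat_map in Hf. destruct Hf as [k [_ Hf]].
      apply in_map_iff in Hf. destruct Hf as [j [<- Hj]]. apply in_seq in Hj.
      eapply aff_ext with (g := fun y => sumR d (fun i => (fun i y => A k i * y (j * d + i)%nat) i y) + (-1) * (fun _ => B k) y).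
      { intros y. unfold fk, dot. ring. }
      apply aff_plus. apply aff_sumR. intros i Hi. apply aff_scal. apply aff_proj. apply seq_NoDup.
      apply in_seq. nia. apply aff_scal, aff_const.
    - unfold Lp. apply nodup_map_inj. apply allb_nodup.
      intros s s' Hs Hs' E. rewrite !Hpat in E.
      apply allb_in in Hs, Hs'. apply nth_ext with false false. congruence.
      intros k Hk. rewrite Hs in Hk.
      assert (Hsg := flat_seq_eq _ _ 0 n (S d) E k).
      assert (Hr : forall s, RHS d (fun j => dot d (A k) (V s j) - B k) <-> nth k s false = true).
      { intros s0. rewrite <- HVs by lia. rewrite (meets_iff d (V s0) (A k) (B k) (hk k)). unfold RHS. tauto.
        apply HABk. lia. }
      destruct (nth k s false) eqn:E1, (nth k s' false) eqn:E2; auto.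
      * exfalso. assert (RHS d (fun j => dot d (A k) (V s' j) - B k)); [|rewrite Hr, E2 in H0; discriminate].
        apply RHS_sgn with (fun j => dot d (A k) (V s j) - B k). intros j Hj. apply Hsg; lia.
        rewrite Hr; auto.
      * exfalso. assert (RHS d (fun j => dot d (A k) (V s j) - B k)); [|rewrite Hr, E1 in H0; discriminate].
        apply RHS_sgn with (fun j => dot d (A k) (V s' j) - B k). intros j Hj. symmetry. apply Hsg; lia.
        rewrite Hr; auto.
    - intros p Hp. unfold Lp in Hp. apply in_map_iff in Hp. destruct Hp as [s [<- _]]. exists (ys s); auto. }
  unfold Lp in HLp. rewrite length_map, allb_length, pow_INR in HLp. simpl (INR 2) in HLp.
  assert (Hfl : length fs = (n * (d + 1))%nat).
  { unfold fs. rewrite (flat_len _ _ (S d)), length_seq. lia. intros; rewrite length_map, length_seq; auto. }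
  assert (HIl : length I = (d * (d + 1))%nat) by (unfold I; rewrite length_seq; lia).
  rewrite Hfl, HIl in HLp. apply final_ineq; auto.
Qed.


Definition ind (t i : nat) : R := if Nat.eqb i t then 1 else 0.
Definition P (j : nat) : pt := match j with O => fun _ => -1 | S m => fun i => ind m i end.
Definition An (j t : nat) : pt := match j with O => fun i => ind t i | S m => fun i => /2 * ind t i - ind m i end.
Definition Aval (j t : nat) (x : pt) : R := match j with O => x t | S m => /2 * x t - x m end.

Lemma dot_An d j t x : (t < d)%nat -> (j <= d)%nat -> dot d (An j t) x = Aval j t x.
Proof. intros Ht Hj. unfold dot, An, ind. destruct j as [|m]; simpl.
  - rewrite sumR_indx; auto; ring.
  - rewrite (sumR_ext _ _ (fun i => /2 * ((if Nat.eqb i t then 1 else 0) * x i) - (if Nat.eqb i m then 1 else 0) * x i)) by (intros; ring).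
    rewrite sumR_minus, sumR_scal, !sumR_indx by lia. ring.
Qed.

Definition Bv d j t := dot d (An j t) (P j).

Definition hyp d (k : nat) : pt -> Prop := fun x => dot d (An (k / d) (k mod d)) x = Bv d (k / d) (k mod d).

Lemma ind_cases t i : (ind t i = 1 /\ i = t) \/ (ind t i = 0 /\ i <> t).
Proof. unfold ind. destruct (Nat.eqb_spec i t); auto. Qed.


Definition sig_of (Sp : nat -> Prop) d (j t : nat) : R :=
  if excluded_middle_informative (Sp (j * d + t)%nat) then -1 else 1.

Lemma sig_cases Sp d j t : sig_of Sp d j t = 1 \/ sig_of Sp d j t = -1.
Proof. unfold sig_of. destruct excluded_middle_informative; auto. Qed.

Definition eps d := / (100 * INR d).

Definition delta Sp d (j : nat) : pt :=
  match j with
  | O => fun t => eps d * sig_of Sp d O t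
  | S m => fun t => if Nat.eqb t m then - eps d * sig_of Sp d j m else 2 * eps d * (sig_of Sp d j t - sig_of Sp d j m)
  end.

Definition vert Sp d (j : nat) : pt := fun i => P j i + delta Sp d j i.

Lemma eps_pos d : (1 <= d)%nat -> 0 < eps d /\ 100 * INR d * eps d = 1.
Proof. intros Hd. assert (1 <= INR d) by (replace 1 with (INR 1) by reflexivity; apply le_INR; auto).
  unfold eps. split. apply Rinv_0_lt_compat; lra. field; lra. Qed.

Lemma delta_bound Sp d j u : (1 <= d)%nat -> - (4 * eps d) <= delta Sp d j u <= 4 * eps d.
Proof. intros Hd. destruct (eps_pos d Hd) as [He _]. destruct j as [|m]; simpl.
  - destruct (sig_cases Sp d 0 u) as [E|E]; rewrite E; lra.
  - destruct (Nat.eqb u m).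
    + destruct (sig_cases Sp d (S m) m) as [E|E]; rewrite E; lra.
    + destruct (sig_cases Sp d (S m) m) as [E|E]; destruct (sig_cases Sp d (S m) u) as [E'|E']; rewrite E, E'; lra.
Qed.

Definition val Sp d j t i := Aval j t (vert Sp d i) - Aval j t (P j).

Lemma val_own Sp d j t : (1 <= d)%nat -> (t < d)%nat -> (j <= d)%nat ->
  exists c, 0 < c /\ val Sp d j t j = c * sig_of Sp d j t.
Proof. intros Hd Ht Hj. destruct (eps_pos d Hd) as [He _]. unfold val, vert. destruct j as [|m]; simpl.
  - exists (eps d). split; auto. ring.
  - destruct (Nat.eqb_spec t m).
    + subst. exists (eps d / 2). split. lra. rewrite Nat.eqb_refl. field.
    + exists (eps d). split; auto. rewrite Nat.eqb_refl. destruct (Nat.eqb_spec t m); [lia|]. field.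
Qed.

Lemma val_other Sp d j t i : (1 <= d)%nat -> (t < d)%nat -> (j <= d)%nat -> (i <= d)%nat -> i <> j -> 0 < val Sp d j t i.
Proof. intros Hd Ht Hj Hi Hij. destruct (eps_pos d Hd) as [He He'].
  assert (1 <= INR d) by (replace 1 with (INR 1) by reflexivity; apply le_INR; auto).
  assert (eps d <= /100) by (apply Rmult_le_reg_l with (100 * INR d); [lra|]; rewrite He'; nra).
  unfold val, vert.
  pose proof (delta_bound Sp d i t Hd). destruct j as [|m], i as [|m']; cbn [Aval P]; try lia.
  - destruct (ind_cases m' t) as [[-> _]|[-> _]]; lra.
  - pose proof (delta_bound Sp d 0 m Hd). unfold ind at 2. rewrite Nat.eqb_refl.
    destruct (ind_cases m t) as [[-> _]|[-> _]]; lra.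
  - pose proof (delta_bound Sp d (S m') m Hd). assert (m' <> m) by lia.
    assert (ind m m = 1) by (unfold ind; rewrite Nat.eqb_refl; auto).
    assert (ind m' m = 0) by (unfold ind; destruct (Nat.eqb_spec m m'); [lia|auto]).
    destruct (ind_cases m t) as [[E1 _]|[E1 _]]; destruct (ind_cases m' t) as [[E2 _]|[E2 _]]; rewrite ?E1, ?E2; lra.
Qed.

Lemma indep Sp d : (1 <= d)%nat -> affinely_independent d (vert Sp d).
Proof.
  intros Hd l Hsum Hcoord. destruct (eps_pos d Hd) as [He He'].
  assert (HdR : 1 <= INR d) by (replace 1 with (INR 1) by reflexivity; apply le_INR; auto).
  set (e := eps d) in *.
  set (Sig := sumR (S d) (fun j => Rabs (l j))).
  assert (HSig : 0 <= Sig) by (apply sumR_nonneg; intros; apply Rabs_pos).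
  set (r := fun i => sumR (S d) (fun j => l j * delta Sp d j i)).
  assert (Hr : forall i, Rabs (r i) <= 4 * e * Sig).
  { intros i. unfold r. eapply Rle_trans. apply sumR_abs. unfold Sig. rewrite <- sumR_scal. apply sumR_le.
    intros j _. rewrite Rabs_mult. pose proof (delta_bound Sp d j i Hd). fold e in H.
    assert (Rabs (delta Sp d j i) <= 4 * e) by (apply Rabs_le; lra).
    pose proof (Rabs_pos (l j)). nra. }
  assert (HP : forall i, (i < d)%nat -> sumR (S d) (fun j => l j * P j i) = - l O + l (S i)).
  { intros i Hi. rewrite sumR_shift. cbn [P].
    rewrite (sumR_ext _ _ (fun m => if Nat.eqb m i then l (S i) else 0)). rewrite sumR_ind; auto. ring.
    intros m _. unfold ind. destruct (Nat.eqb_spec i m), (Nat.eqb_spec m i); subst; try lia; ring. }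
  assert (HlS : forall i, (i < d)%nat -> l (S i) = l O - r i).
  { intros i Hi. specialize (Hcoord i Hi). unfold vert in Hcoord.
    rewrite (sumR_ext _ _ (fun j => l j * P j i + l j * delta Sp d j i)) in Hcoord by (intros; ring).
    rewrite sumR_plus, HP in Hcoord by auto. fold (r i) in Hcoord. lra. }
  assert (Hl0 : (INR d + 1) * l O = sumR d r).
  { rewrite sumR_shift in Hsum. rewrite (sumR_ext d _ (fun m => l O - r m)) in Hsum by (intros; apply HlS; auto).
    rewrite sumR_minus in Hsum. rewrite (sumR_ext d (fun _ => l O) (fun _ => l O * 1)) in Hsum by (intros; ring).
    rewrite sumR_scal in Hsum. assert (sumR d (fun _ => 1) = INR d).
    { clear. induction d; simpl; auto. rewrite IHd. destruct d; simpl; lra. }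
    rewrite H in Hsum. lra. }
  assert (Hsr : Rabs (sumR d r) <= INR d * (4 * e * Sig)).
  { eapply Rle_trans. apply sumR_abs. apply sumR_bound. intros; apply Hr. }
  assert (Habs0 : (INR d + 1) * Rabs (l O) <= INR d * (4 * e * Sig)).
  { rewrite <- (Rabs_pos_eq (INR d + 1)) by lra. rewrite <- Rabs_mult, Hl0. auto. }
  assert (HSig2 : Sig <= (INR d + 1) * Rabs (l O) + INR d * (4 * e * Sig)).
  { assert (ES : Sig = Rabs (l O) + sumR d (fun m => Rabs (l (S m)))) by (unfold Sig; apply sumR_shift).
    assert (sumR d (fun m => Rabs (l (S m))) <= INR d * (Rabs (l O) + 4 * e * Sig)).
    { apply sumR_bound. intros m Hm. rewrite HlS by auto. unfold Rminus.
      eapply Rle_trans. apply Rabs_triang. rewrite Rabs_Ropp. pose proof (Hr m). lra. }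
    lra. }
  assert (HSig0 : Sig = 0).
  { assert (Sig <= 8 * (INR d * e) * Sig) by nra.
    assert (INR d * e = / 100) by (rewrite <- (Rmult_1_l (/100)), <- He'; field).
    rewrite H0 in H. lra. }
  intros j Hj. assert (Rabs (l j) <= Sig) by (apply (sumR_term (S d) (fun j => Rabs (l j))); [intros; apply Rabs_pos|lia]).
  pose proof (Rabs_pos (l j)). assert (Rabs (l j) = 0) by lra.
  destruct (Req_dec (l j) 0); auto. exfalso. apply Rabs_no_R0 in H2. auto.
Qed.

Lemma lower d : (1 <= d)%nat -> exists H : list (pt -> Prop), shattered d H /\ (d * (d + 1) <= length H)%nat.
Proof.
  intros Hd. set (N := (d * (d + 1))%nat). exists (map (hyp d) (seq 0 N)).
  assert (Hlen : length (map (hyp d) (seq 0 N)) = N) by (rewrite length_map, length_seq; auto).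
  assert (Hnth : forall k, (k < N)%nat -> nth k (map (hyp d) (seq 0 N)) (fun _ => False) = hyp d k).
  { intros k Hk. rewrite (nth_indep _ _ (hyp d 0)) by (rewrite Hlen; auto).
    rewrite map_nth, seq_nth; auto. }
  assert (Hjt : forall k, (k < N)%nat -> (k / d <= d)%nat /\ (k mod d < d)%nat /\ k = (k / d * d + k mod d)%nat).
  { intros k Hk. split; [|split].
    - assert (k / d < d + 1)%nat by (apply Nat.Div0.div_lt_upper_bound; unfold N in Hk; lia). lia.
    - apply Nat.mod_upper_bound; lia.
    - rewrite Nat.mul_comm. apply Nat.div_mod; lia. }
  assert (Hsh : forall Sp : nat -> Prop, exists v, is_simplex d v /\
     forall k, (k < length (map (hyp d) (seq 0 N)))%nat -> (meets_interior d v (nth k (map (hyp d) (seq 0 N)) (fun _ => False)) <-> Sp k)).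
  { intros Sp. exists (vert Sp d). split. apply indep; auto.
    intros k Hk. rewrite Hlen in Hk. rewrite Hnth by auto.
    destruct (Hjt k Hk) as [Hj [Ht Ek]]. set (j := (k / d)%nat) in *. set (t := (k mod d)%nat) in *.
    rewrite (meets_iff d (vert Sp d) (An j t) (Bv d j t)) by (intros; unfold hyp; fold j t; tauto).
    assert (Hv : forall i, (i <= d)%nat -> dot d (An j t) (vert Sp d i) - Bv d j t = val Sp d j t i).
    { intros i Hi. unfold Bv, val. rewrite !dot_An; auto. }
    destruct (val_own Sp d j t Hd Ht Hj) as [c [Hc Hown]].
    assert (Hsk : sig_of Sp d j t = -1 <-> Sp k).
    { unfold sig_of. rewrite <- Ek. destruct excluded_middle_informative; split; intros; auto; try tauto; lra. }
    destruct (sig_cases Sp d j t) as [Es|Es].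
    - split.
      + intros [[_ [i [Hi Hneg]]]|Hz].
        * rewrite Hv in Hneg by auto. destruct (Nat.eq_dec i j).
          -- subst i. rewrite Hown, Es in Hneg. lra.
          -- pose proof (val_other Sp d j t i Hd Ht Hj Hi n). lra.
        * specialize (Hz j Hj). rewrite Hv, Hown, Es in Hz by auto. lra.
      + intros HS. apply Hsk in HS. rewrite HS in Es. lra.
    - split; [intros _; apply Hsk; auto|intros _].
      left. split.
      + set (i0 := if Nat.eqb j 0 then 1%nat else 0%nat).
        assert (Hi0 : i0 <> j /\ (i0 <= d)%nat) by (unfold i0; destruct (Nat.eqb_spec j 0); lia).
        exists i0. split. tauto. rewrite Hv by tauto. apply val_other; tauto.
      + exists j. split; auto. rewrite Hv, Hown, Es by auto. lra. }
  split; [split; [|split]|].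
  - intros k Hk. rewrite Hlen in Hk. rewrite Hnth by auto.
    destruct (Hjt k Hk) as [Hj [Ht _]].
    exists (An (k / d) (k mod d)), (Bv d (k / d) (k mod d)). split; [|intros; unfold hyp; tauto].
    exists (k mod d). split; auto. unfold An. destruct (k / d)%nat as [|m].
    + unfold ind. rewrite Nat.eqb_refl. lra.
    + unfold ind. rewrite Nat.eqb_refl. destruct (Nat.eqb (k mod d) m); lra.
  - intros k1 k2 Hk1 Hk2 Hne Heq.
    destruct (Hsh (fun k => k = k1)) as [v [_ Hv]].
    pose proof (Hv k1 Hk1) as A1. pose proof (Hv k2 Hk2) as A2.
    assert (meets_interior d v (nth k1 (map (hyp d) (seq 0 N)) (fun _ => False)) <->
            meets_interior d v (nth k2 (map (hyp d) (seq 0 N)) (fun _ => False))).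
    { unfold meets_interior. split; intros [x [Hx1 Hx2]]; exists x; split; auto; apply Heq; auto. }
    apply Hne. symmetry. apply A2, H, A1. reflexivity.
  - exact Hsh.
  - rewrite Hlen. unfold N. lia.
Qed.


Theorem lemmav (d : nat) (hd : (9 <= d)%nat) :
  (exists H : list (pt -> Prop), shattered d H /\ (d * (d + 1) <= length H)%nat) /\
  (forall H : list (pt -> Prop), shattered d H ->
     INR (length H) <= 5 * INR d ^ 2 * log2 (INR d)).
Proof.
  split.
  - apply lower. lia.
  - intros H HH. apply upper; auto.
Qed.
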